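(* Let $f:\mathbb{N}\to\mathbb{N}$ be an unbounded non-decreasing function with $f(x)\le x$ for all $x$, and define $g:\mathbb{N}\to\mathbb{N}$ by $g(p)=\max\{i: f(i)\le p\}$. Then for every finite simple graph $G$ and every non-negative integer $r$, $$\nabla_r(G)\le N_f(G,2r+1)^{2r+1}\, g(2r+1)^2.$$
   Context: For a finite simple graph $G$, a function $f:\mathbb{N}\to\mathbb{N}$ and a positive integer $p$, $N_f(G,p)$ denotes the minimum number of colours in a colouring of the edges of $G$ such that every cycle $\gamma$ of $G$ receives at least $\min(f(|\gamma|),p+1)$ distinct colours, where $|\gamma|$ is the length of $\gamma$. A simple graph $H$ is a shallow minor of $G$ at depth $r$ if there are pairwise vertex-disjoint subtrees $T_1,\dots,T_k$ of $G$, each having a root from which every vertex of the tree is at distance at most $r$ in the tree, such that $H$ is isomorphic to a subgraph of the graph with vertex set $\{T_1,\dots,T_k\}$ in which $T_i,T_j$ are adjacent iff some edge of $G$ joins a vertex of $T_i$ to a vertex of $T_j$. $\nabla_r(G)$ is the maximum of $\|H\|/|H|$ over all shallow minors $H$ of $G$ at depth $r$, where $\|H\|$ is the number of edges and $|H|$ the number of vertices. *)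

(* Defs.v *)
From mathcomp Require Import all_boot.
Set Implicit Arguments. Unset Strict Implicit. Unset Printing Implicit Defensive.

Definition simple_graph (T : finType) (e : rel T) : Prop :=
  symmetric e /\ irreflexive e.

(* A cycle of G, as the cyclic sequence of its (distinct) vertices v_0 ... v_{n-1},
   n >= 3, with v_i ~ v_{i+1} and v_{n-1} ~ v_0.  Its length is [size s]. *)
Definition is_cycle (T : finType) (e : rel T) (s : seq T) : bool :=
  [&& 3 <= size s, uniq s & cycle e s].

Definition cycle_edges (T : finType) (s : seq T) : seq (T * T) :=
  zip s (rot 1 s).

Definition ncolours (T : finType) (K : eqType) (c : T -> T -> K) (s : seq T) : nat :=
  size (undup [seq c xy.1 xy.2 | xy <- cycle_edges s]).

(* An edge colouring
   is a symmetric function on pairs of vertices (only its values on edges matter). *)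
Definition good_colouring_exists (f : nat -> nat) (T : finType) (e : rel T)
    (p k : nat) : Prop :=
  exists c : T -> T -> 'I_k,
    (forall x y, c x y = c y x) /\
    (forall s, is_cycle e s -> minn (f (size s)) p.+1 <= ncolours c s).

Definition is_Nf (f : nat -> nat) (T : finType) (e : rel T) (p k : nat) : Prop :=
  good_colouring_exists f e p k /\
  (forall k', good_colouring_exists f e p k' -> k <= k').

(* A depth-r model: k pairwise vertex-disjoint branch sets B i, each containing a
   root (root i), such that every vertex of B i is joined to root i by a path of
   length <= r inside B i (equivalently, B i spans a subtree of G of radius <= r
   around root i). *)
Definition shallow_model (T : finType) (e : rel T) (r k : nat)
    (root : 'I_k -> T) (B : 'I_k -> {set T}) : Prop :=
  (forall i j, i != j -> [disjoint B i & B j]) /\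
  (forall i, root i \in B i) /\
  (forall i v, v \in B i ->
     exists q : seq T, [/\ path e v q, last v q = root i, size q <= r
                          & all (fun x => x \in B i) q]).

Definition minor_adj (T : finType) (e : rel T) (k : nat) (B : 'I_k -> {set T})
    (i j : 'I_k) : bool :=
  [exists x, exists y, [&& x \in B i, y \in B j & e x y]].

Definition shallow_minor (T : finType) (e : rel T) (r : nat)
    (V : finType) (eH : rel V) : Prop :=
  exists (k : nat) (root : 'I_k -> T) (B : 'I_k -> {set T}) (phi : V -> 'I_k),
    [/\ shallow_model e r root B, injective phi
      & forall u v, eH u v -> minor_adj e B (phi u) (phi v)].

(* Number of edges ||H|| of a simple graph (each edge counted as two ordered pairs). *)
Definition nedges (V : finType) (eH : rel V) : nat :=
  #|[set uv : V * V | eH uv.1 uv.2]| %/ 2.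

(* nabla_r(G) <= X : every shallow minor H at depth r (with |H| > 0) has
   ||H|| / |H| <= X. *)
Definition nabla_le (T : finType) (e : rel T) (r X : nat) : Prop :=
  forall (V : finType) (eH : rel V), simple_graph eH -> shallow_minor e r eH ->
    0 < #|V| -> nedges eH <= X * #|V|.

(* Main.v *)
Require Import Defs.
From mathcomp Require Import all_boot zify.
Set Implicit Arguments. Unset Strict Implicit. Unset Printing Implicit Defensive.

Section Degen.
Variables (V : finType) (h : rel V).
Hypothesis hsym : symmetric h.

Definition nbr (A : {set V}) v := [set w in A | h v w].
Definition pairsIn (A : {set V}) :=
  [set uv : V * V | [&& uv.1 \in A, uv.2 \in A & h uv.1 uv.2]].

Lemma degen_bound D :
  (forall A : {set V}, A != set0 -> exists2 v, v \in A & #|nbr A v| <= D) ->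
  forall A, #|pairsIn A| <= 2 * D * #|A|.
Proof.
move=> HD A; move: {2}#|A| (leqnn #|A|) => n; elim: n A => [|n IH] A hA.
  have A0 : A = set0 by apply/eqP; rewrite -cards_eq0; lia.
  rewrite A0 cards0 muln0 leqn0 cards_eq0; apply/eqP/setP => uv.
  by rewrite !inE.
have [->|An0] := eqVneq A set0.
  rewrite cards0 muln0 leqn0 cards_eq0; apply/eqP/setP => uv.
  by rewrite !inE.
have [v vA hv] := HD A An0.
have sub : pairsIn A \subset pairsIn (A :\ v) :|: ((pair v) @: nbr A v)
                          :|: ((fun w => (w, v)) @: nbr A v).
  apply/subsetP => [[x y]]; rewrite /pairsIn !inE /= => /and3P[xA yA hxy].
  have [xv|xv] := eqVneq x v.
    subst x; apply/orP; left; apply/orP; right; apply/imsetP; exists y => //.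
    by rewrite /nbr inE yA hxy.
  have [yv|yv] := eqVneq y v.
    subst y; apply/orP; right; apply/imsetP; exists x => //.
    by rewrite /nbr inE xA hsym hxy.
  by rewrite xA yA hxy.
have c1 := subset_leq_card sub.
have c2 := (leq_card_setU (pairsIn (A :\ v) :|: ((pair v) @: nbr A v)) ((fun w => (w, v)) @: nbr A v)).1.
have c3 := (leq_card_setU (pairsIn (A :\ v)) ((pair v) @: nbr A v)).1.
have c4 : #|(pair v) @: nbr A v| <= #|nbr A v| by apply: leq_imset_card.
have c5 : #|(fun w => (w, v)) @: nbr A v| <= #|nbr A v| by apply: leq_imset_card.
have cA := cardsD1 v A; rewrite vA /= in cA.
have IH' := IH (A :\ v) ltac:(lia).
have e1 := leq_mul (leqnn (2 * D)) (leqnn #|A :\ v|).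
nia.
Qed.

Hypothesis hirr : irreflexive h.

Lemma cyc_of (A : {set V}) x q : all (mem A) (x :: q) -> uniq (x :: q) -> path h x q ->
  (forall w, w \in nbr A (last x q) -> w \in x :: q) -> 0 < #|nbr A (last x q)| ->
  exists c, [&& uniq c, cycle h c & #|nbr A (last x q)| < size c].
Proof.
move=> aq uq pq Hin n0.
move Es : (x :: q) => s; move Ez : (last x q) => z.
have zs : last x s = z by rewrite -Es -Ez.
rewrite Es in uq aq Hin; rewrite Ez in Hin n0.
have srt : sorted h s by rewrite -Es.
case: (boolP (has (h z) s)) => hs; last first.
  exfalso; move: n0; rewrite card_gt0 => /set0Pn [w wn]; have ws := Hin w wn.
  move: wn; rewrite /nbr inE => /andP[_ hw]; move/hasP: hs; apply; by exists w.
move Ei : (find (h z) s) => i.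
have iS : i < size s by rewrite -Ei -has_find.
have dc := drop_nth x iS.
move Ey : (nth x s i) dc => y; move Er : (drop i.+1 s) => rest dc.
have hzy : h z y by rewrite -Ey -Ei; apply: nth_find.
have zl : z = last y rest.
  have : last x s = last (last x (take i s)) (drop i s) by rewrite -last_cat cat_take_drop.
  by rewrite dc zs.
have uc : uniq (drop i s) by apply: drop_uniq.
have pc : path h y rest.
  have := @cat_sorted2 _ h (take i s) (drop i s); rewrite cat_take_drop => /(_ srt) [_].
  by rewrite dc.
exists (drop i s); rewrite uc /=.
have cc : cycle h (drop i s) by rewrite dc /= rcons_path pc -zl hzy.
rewrite cc /=.
have sub : nbr A z \subset [predD1 (drop i s) & z].
  apply/subsetP => w wn; rewrite inE.
  have hw : h z w by move: wn; rewrite /nbr inE => /andP[].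
  have wz : w != z.
    apply/eqP => ewz; move: hw; by rewrite ewz hirr.
  rewrite wz /=.
  have ws := Hin w wn.
  have ge : i <= index w s.
    rewrite leqNgt; apply/negP => lt.
    move: lt; rewrite -Ei => lt; have := before_find x lt; by rewrite nth_index // hw.
  have ilt : index w s < size s by rewrite index_mem.
  have -> : w = nth x (drop i s) (index w s - i) by rewrite nth_drop subnKC // nth_index.
  apply: mem_nth; rewrite size_drop; exact: ltn_sub2r iS ilt.
have zc : z \in drop i s by rewrite dc zl; apply: mem_last.
have c1 := subset_leq_card sub.
have c2 : #|drop i s| = (z \in drop i s) + #|[predD1 drop i s & z]| := cardD1 _ _; rewrite zc in c2.
have c3 : #|drop i s| = size (drop i s) by apply/card_uniqP.
by rewrite -c3 c2 add1n ltnS.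
Qed.

Lemma few_nbr L : 0 < L ->
  (forall s, [&& 3 <= size s, uniq s & cycle h s] -> size s <= L) ->
  forall A : {set V}, A != set0 -> exists2 v, v \in A & #|nbr A v| <= L.
Proof.
move=> L0 Hc A An0.
case: (boolP [exists v in A, #|nbr A v| <= L]) => [/existsP[v /andP[]] | /exists_inPn Hall].
  by move=> ??; exists v.
have big v : v \in A -> L < #|nbr A v| by move=> vA; rewrite ltnNge Hall.
suff: exists x q, [&& uniq (x :: q), path h x q, all (mem A) (x :: q) & #|A| <= size q].
  case=> x [q /and4P[uq _ aq sq]].
  have := uniq_leq_size (s2 := enum A) uq.
  have -> : size (enum A) = #|A| by rewrite cardE.
  suff H : {subset x :: q <= enum A} by move=> /(_ H) /= HH; exfalso; move: (leq_trans HH sq); rewrite ltnn.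
  by move=> w wq; rewrite mem_enum; apply: (allP aq).
elim: #|A| => [|m [x [q /and4P[uq pq aq sq]]]].
  case/set0Pn: An0 => v vA; exists v, [::]; by rewrite /= vA.
set z := last x q.
have zA : z \in A by apply: (allP aq); apply: mem_last.
case: (boolP [exists w in nbr A z, w \notin x :: q]) => [/exists_inP[w wn wq] | /exists_inPn Hin].
  move: wn; rewrite /nbr inE => /andP[wA hzw].
  exists x, (rcons q w); rewrite size_rcons ltnS sq andbT.
  have -> : x :: rcons q w = rcons (x :: q) w by [].
  by rewrite rcons_uniq wq uq rcons_path pq hzw all_rcons aq !andbT; exact: wA.
exfalso.
have Hin' w : w \in nbr A z -> w \in x :: q by move=> wn; have := Hin w wn; rewrite negbK.
have bz := big z zA.
have [c /and3P[uc cc sc]] := cyc_of aq uq pq Hin' (leq_ltn_trans (leq0n _) bz).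
have := Hc c; rewrite uc cc andbT.
have -> : 3 <= size c by apply: leq_ltn_trans sc; exact: leq_ltn_trans L0 bz.
move=> /(_ isT) H; have := leq_ltn_trans H (ltn_trans bz sc); by rewrite ltnn.
Qed.
End Degen.

Lemma card_bigcup_leq (I T : finType) (F : I -> {set T}) :
  #|\bigcup_i F i| <= \sum_i #|F i|.
Proof.
apply: (big_ind2 (fun (A : {set T}) n => #|A| <= n)).
- by rewrite cards0.
- move=> A a B b hA hB; apply: leq_trans (leq_card_setU A B).1 _; exact: leq_add.
- by [].
Qed.

Section Flat.
Variables (U T : eqType) (R : rel T) (fa : U -> T) (fp : U -> seq T).

Definition flatW (s : seq U) := flatten [seq fa u :: fp u | u <- s].

Lemma flat_path u0 s :
  path (fun u v => R (last (fa u) (fp u)) (fa v)) u0 s ->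
  (forall u, u \in u0 :: s -> path R (fa u) (fp u)) ->
  path R (fa u0) (fp u0 ++ flatW s) /\
  last (fa u0) (fp u0 ++ flatW s) = last (fa (last u0 s)) (fp (last u0 s)).
Proof.
elim: s u0 => [|v s IH] u0 /=.
  by move=> _ H; rewrite cats0; split=> //; apply: H; rewrite inE eqxx.
move=> /andP[q0 qs] H.
have [IH1 IH2] := IH v qs (fun u us => H u ltac:(by rewrite inE us orbT)).
rewrite cat_path /= q0 IH1 H ?inE ?eqxx //; split=> //.
by rewrite last_cat /= IH2.
Qed.

Lemma flat_cycle (s : seq U) :
  uniq s -> (forall u, u \in s -> path R (fa u) (fp u)) ->
  (forall u, u \in s -> R (last (fa u) (fp u)) (fa (next s u))) ->
  cycle R (flatW s).
Proof.
move=> us Hp Hn.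
have cQ : cycle (fun u v => R (last (fa u) (fp u)) (fa v)) s.
  apply: (sub_in_cycle (P := mem s)) (cycle_next us); last by apply/allP.
  by move=> u v us' _ /= /eqP <-; apply: Hn.
case: s us Hp Hn cQ => [|u0 s] //= us Hp Hn.
rewrite rcons_path => /andP[pQ lQ].
have [P1 P2] := flat_path pQ Hp.
rewrite -/(flatW s) rcons_path P1 /= P2.
exact: lQ.
Qed.

Lemma flat_uniq (s : seq U) (BB : U -> pred T) :
  uniq s -> (forall u, u \in s -> uniq (fa u :: fp u)) ->
  (forall u, u \in s -> all (BB u) (fa u :: fp u)) ->
  (forall u v x, u \in s -> v \in s -> BB u x -> BB v x -> u = v) ->
  uniq (flatW s).
Proof.
elim: s => [|u s IH] // /andP[us uss] Hu Hb Hd.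
have -> : flatW (u :: s) = (fa u :: fp u) ++ flatW s by [].
rewrite cat_uniq Hu ?inE ?eqxx // IH //; first last.
- by move=> a b x ha hb; apply: Hd; rewrite inE ?ha ?hb orbT.
- by move=> a ha; apply: Hb; rewrite inE ha orbT.
- by move=> a ha; apply: Hu; rewrite inE ha orbT.
rewrite andbT /=; apply/hasPn => x /flattenP [w /mapP [v vs ->]] xw.
apply/negP => xu.
have bu : BB u x by apply: (allP (Hb u _)) xu; rewrite inE eqxx.
have bv : BB v x by apply: (allP (Hb v _)) xw; rewrite inE vs orbT.
have := Hd u v x; rewrite !inE eqxx vs orbT => /(_ isT isT bu bv) uv.
by move: us; rewrite uv vs.
Qed.

Lemma size_flatW s : size s <= size (flatW s).
Proof. elim: s => // u s IH; rewrite /flatW /= size_cat /= -/(flatW s) ltnS; exact: leq_trans IH (leq_addl _ _). Qed.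
End Flat.

Lemma path_zip_all (T : eqType) (R : rel T) x q y :
  path R x (rcons q y) -> all (fun z => R z.1 z.2) (zip (x :: q) (rcons q y)).
Proof.
elim: q x => [|z q IH] x /=; first by rewrite andbT.
by move=> /andP[-> /IH].
Qed.

Lemma cycle_zip_all (T : eqType) (R : rel T) s :
  cycle R s -> all (fun z => R z.1 z.2) (zip s (rot 1 s)).
Proof. case: s => [|w s] //= H; rewrite rot1_cons; exact: path_zip_all. Qed.

Section Main.
Variables (T : finType) (e : rel T) (esym : symmetric e) (k p : nat)
  (c : T -> T -> 'I_k) (csym : forall x y, c x y = c y x) (L : nat)
  (HcycL : forall s, is_cycle e s -> ncolours c s <= p -> size s <= L).
Variables (m : nat) (root : 'I_m -> T) (B : 'I_m -> {set T})
  (Bdisj : forall i j, i != j -> [disjoint B i & B j]).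
Variables (V : finType) (eH : rel V) (phi : V -> 'I_m) (phi_inj : injective phi).

Definition col (t : {ffun 'I_p -> 'I_k}) x y := c x y \in codom t.
Definition EE t i := [rel x y | [&& x \in B i, y \in B i, e x y & col t x y]].
Definition Bp t i := [set w in B i | connect (EE t i) w (root i)].
Definition Aadj t i j :=
  [exists x, exists y, [&& x \in Bp t i, y \in Bp t j, e x y & col t x y]].
Definition hh t := [rel u v | eH u v && Aadj t (phi u) (phi v)].

Lemma colsym t x y : col t x y = col t y x.
Proof. by rewrite /col csym. Qed.

Lemma EEsym t i : symmetric (EE t i).
Proof. by move=> x y /=; rewrite esym colsym; case: (x \in B i); case: (y \in B i). Qed.

Lemma path_EE_all t i x q : path (EE t i) x q -> all (mem (B i)) q.
Proof.
elim: q x => [|y q IH] x //= /andP[/and4P[_ yB _ _] pq].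
by rewrite (IH y pq) andbT; exact: yB.
Qed.

Lemma lift_cyc t s : is_cycle (hh t) s -> size s <= L.
Proof.
move=> /and3P[s3 us cs].
have HXY0 : forall ij : 'I_m * 'I_m, exists xy : T * T, Aadj t ij.1 ij.2 ->
   [&& xy.1 \in Bp t ij.1, xy.2 \in Bp t ij.2, e xy.1 xy.2
     & col t xy.1 xy.2].
  move=> [i j] /=.
  case: (boolP (Aadj t i j)) => [/existsP[x /existsP[y H]] | _].
    by exists (x, y).
  by exists (root i, root i).
have [XY HXY] := fin_all_exists HXY0.
have HP0 : forall iab : 'I_m * T * T, exists q : seq T,
   iab.1.2 \in Bp t iab.1.1 -> iab.2 \in Bp t iab.1.1 ->
   [&& path (EE t iab.1.1) iab.1.2 q, uniq (iab.1.2 :: q)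
     & last iab.1.2 q == iab.2].
  move=> [[i a] b] /=.
  case: (boolP ((a \in Bp t i) && (b \in Bp t i))) => [/andP[ha hb] | hn]; last first.
    by exists [::] => ha hb; rewrite ha hb in hn.
  have cab : connect (EE t i) a b.
    move: ha hb; rewrite !inE => /andP[_ ca] /andP[_ cb].
    apply: connect_trans ca _; by rewrite (sym_connect_sym (EEsym t i)).
  case/connectP: cab => q pq lq.
  rewrite lq; case: (shortenP pq) => q' pq' uq' _.
  by exists q' => _ _; rewrite pq' /= eqxx andbT; exact: uq'.
have [P HP] := fin_all_exists HP0.
pose a u := (XY (phi (prev s u), phi u)).2.
pose b u := (XY (phi u, phi (next s u))).1.
pose fp u := P (phi u, a u, b u).
have Hprev u : u \in s -> Aadj t (phi (prev s u)) (phi u).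
  by move=> us'; have /andP[] := prev_cycle cs us'.
have Hnext u : u \in s -> Aadj t (phi u) (phi (next s u)).
  by move=> us'; have /andP[] := next_cycle cs us'.
have Ha u : u \in s -> a u \in Bp t (phi u).
  by move=> us'; have /and4P[] := HXY (phi (prev s u), phi u) (Hprev u us').
have Hb u : u \in s -> b u \in Bp t (phi u).
  by move=> us'; have /and4P[] := HXY (phi u, phi (next s u)) (Hnext u us').
have HPu u : u \in s -> [&& path (EE t (phi u)) (a u) (fp u), uniq (a u :: fp u)
     & last (a u) (fp u) == b u].
  by move=> us'; apply: (HP (phi u, a u, b u)); [apply: Ha | apply: Hb].
pose e' := [rel x y | e x y && col t x y].
pose W := flatW a fp s.
have uW : uniq W.
  apply: (flat_uniq (BB := fun u => mem (B (phi u)))) => //.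
  - by move=> u us'; case/and3P: (HPu u us').
  - move=> u us' /=; case/and3P: (HPu u us') => pu _ _.
    rewrite (path_EE_all pu) andbT.
    by move: (Ha u us'); rewrite inE => /andP[].
  - move=> u v x _ _ xu xv; apply: phi_inj; apply/eqP; apply/negPn/negP => ne.
    have := disjointFr (Bdisj ne) xu; by rewrite [x \in B _]xv.
have cW : cycle e' W.
  apply: flat_cycle => //.
  - move=> u us'; case/and3P: (HPu u us') => pu _ _.
    by apply: sub_path pu => x y /= /and4P[_ _ -> ->].
  - move=> u us'; case/and3P: (HPu u us') => _ _ /eqP ->.
    have : a (next s u) = (XY (phi u, phi (next s u))).2 by rewrite /a prev_next.
    move=> ->; rewrite /e' /b /=; by have /and4P[_ _ -> ->] := HXY (phi u, phi (next s u)) (Hnext u us').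
have sW : size s <= size W by apply: size_flatW.
have icW : is_cycle e W.
  rewrite /is_cycle uW (leq_trans s3 sW) /=.
  by apply: sub_cycle cW => x y /= /andP[].
apply: leq_trans sW _; apply: HcycL => //.
rewrite /ncolours.
have -> : p = size (codom t) by rewrite size_codom card_ord.
apply: uniq_leq_size; first exact: undup_uniq.
move=> z; rewrite mem_undup => /mapP [xy hxy ->].
have := allP (cycle_zip_all cW) xy hxy; by case/andP.
Qed.


Lemma path_to_EE t i x q : path e x q -> x \in B i -> all (mem (B i)) q ->
  all (fun z => col t z.1 z.2) (zip (x :: q) q) -> path (EE t i) x q.
Proof.
elim: q x => [|y q IH] x //= /andP[exy pq] xB /andP[yB aq] /andP[cxy az].
have yB' : y \in B i := yB.
by rewrite xB exy cxy yB' (IH y pq yB aq az).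
Qed.

Definition colsq x q := [seq c z.1 z.2 | z <- zip (x :: q) q].

Lemma size_colsq x q : size (colsq x q) = size q.
Proof. by rewrite size_map size_zip /=; apply/minn_idPr. Qed.

Lemma cover_edge (r : nat) (hp : 2 * r + 1 <= p)
  (Hmod : forall i v, v \in B i -> exists q : seq T, [/\ path e v q, last v q = root i,
      size q <= r & all (fun x => x \in B i) q]) u v :
  minor_adj e B (phi u) (phi v) -> eH u v -> exists t, hh t u v.
Proof.
move=> /existsP[x /existsP[y /and3P[xB yB exy]]] huv.
have [qx [pqx lqx sqx aqx]] := Hmod _ _ xB.
have [qy [pqy lqy sqy aqy]] := Hmod _ _ yB.
pose cl := colsq x qx ++ c x y :: colsq y qy.
have scl : size cl <= p.
  rewrite size_cat /= !size_colsq; lia.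
pose t := [ffun i : 'I_p => nth (c x y) cl i].
have Hcl z : z \in cl -> z \in codom t.
  move=> zcl; have ilt : index z cl < p by apply: leq_trans scl; rewrite index_mem.
  have -> : z = t (Ordinal ilt) by rewrite ffunE /= nth_index.
  exact: codom_f.
have HB w q i (pq : path e w q) (wB : w \in B i) (aq : all (fun x => x \in B i) q)
    (lq : last w q = root i) (sub : {subset colsq w q <= cl}) : w \in Bp t i.
  rewrite inE wB /=; apply/connectP; exists q => //.
  apply: path_to_EE => //.
  apply/allP => z zz; rewrite /col; apply: Hcl; apply: sub.
  by apply/mapP; exists z.
have xBp : x \in Bp t (phi u).
  by apply: (HB x qx) => // z zz; rewrite mem_cat zz.
have yBp : y \in Bp t (phi v).
  by apply: (HB y qy) => // z zz; rewrite mem_cat inE zz !orbT.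
exists t; rewrite /hh /= huv /=.
apply/existsP; exists x; apply/existsP; exists y.
rewrite xBp yBp exy /col; apply: Hcl; by rewrite mem_cat inE eqxx orbT.
Qed.

Lemma hh_sym t : symmetric eH -> symmetric (hh t).
Proof.
move=> Hs u v /=; rewrite Hs; congr (_ && _).
apply/existsP/existsP => [[x /existsP[y /and4P[a1 a2 a3 a4]]] | [x /existsP[y /and4P[a1 a2 a3 a4]]]];
  exists y; apply/existsP; exists x; by rewrite a1 a2 esym a3 colsym a4.
Qed.

Lemma hh_irr t : irreflexive eH -> irreflexive (hh t).
Proof. by move=> Hi u /=; rewrite Hi. Qed.

End Main.

Theorem mainTheorem3
  (f g : nat -> nat)
  (f_le : forall x, f x <= x)
  (f_mono : forall x y, x <= y -> f x <= f y)
  (f_unbounded : forall m, exists x, m < f x)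
  (g_def : forall p, f (g p) <= p /\ (forall i, f i <= p -> i <= g p))
  (T : finType) (e : rel T) (HG : simple_graph e)
  (r k : nat) (Hk : is_Nf f e (2 * r + 1) k) :
  nabla_le e r (k ^ (2 * r + 1) * g (2 * r + 1) ^ 2).
Proof.
move: Hk; set p := 2 * r + 1 => [[[c [csym Hc]] _]].
case: HG => esym eirr.
have L1 : 0 < g p.
  have := (g_def p).2 p (f_le p); rewrite /p; lia.
have HcycL s : is_cycle e s -> ncolours c s <= p -> size s <= g p.
  move=> cs nc; apply: (g_def p).2; rewrite leqNgt; apply/negP => H.
  have := leq_trans (Hc s cs) nc; by rewrite (minn_idPr H) ltnn.
move=> V eH [eHsym eHirr] [m [root [B [phi [[Bdisj [rootB Hmod]] phi_inj Hadj]]]]] V0.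
have Ht (t : {ffun 'I_p -> 'I_k}) : #|pairsIn (hh e c root B eH phi t) [set: V]| <= 2 * g p * #|V|.
  rewrite -cardsT; apply: degen_bound; first exact: hh_sym.
  apply: few_nbr => //; first exact: hh_irr.
  move=> s cs; exact: (lift_cyc esym csym (L := g p) HcycL Bdisj phi_inj cs).
have sub : [set uv : V * V | eH uv.1 uv.2] \subset
    \bigcup_(t : {ffun 'I_p -> 'I_k}) pairsIn (hh e c root B eH phi t) [set: V].
  apply/subsetP => [[u v]]; rewrite inE /= => huv.
  have [t ht] := cover_edge c (leqnn p) Hmod (Hadj u v huv) huv.
  apply/bigcupP; exists t => //; rewrite /pairsIn !inE /=; exact: ht.
have c1 := subset_leq_card sub.
have c2 := card_bigcup_leq (fun t : {ffun 'I_p -> 'I_k} => pairsIn (hh e c root B eH phi t) [set: V]).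
have c3 : \sum_(t : {ffun 'I_p -> 'I_k}) #|pairsIn (hh e c root B eH phi t) [set: V]|
          <= \sum_(t : {ffun 'I_p -> 'I_k}) (2 * g p * #|V|) by apply: leq_sum => t _.
rewrite sum_nat_const card_ffun !card_ord in c3.
rewrite /nedges.
have : #|[set uv : V * V | eH uv.1 uv.2]| <= 2 * (k ^ p * g p * #|V|).
  apply: leq_trans c1 _; apply: leq_trans c2 _; apply: leq_trans c3 _; lia.
move=> /(leq_div2r 2); rewrite mulKn // => H; apply: leq_trans H _.
rewrite -!mulnA leq_mul2l; apply/orP; right; rewrite mulnA leq_mul2r; apply/orP; right.
by rewrite leq_pmulr.
Qed.
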